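(* Let $\mathscr X\in\mathbb R^{I_1\times\cdots\times I_N}$ be a nonzero tensor, and set $R_n=\operatorname{rank}(\mathbf X_{(n)})$ for $1\leq n\leq N$. Then $\mathscr X$ has a subtensor $\mathscr Y\in\mathbb R^{R_1\times\cdots\times R_N}$ with $\operatorname{rank}(\mathbf Y_{(n)})=R_n$ for all $1\leq n\leq N$.
   Context: All tensors are real. For $\mathscr X\in\mathbb R^{I_1\times\cdots\times I_N}$, the mode-$n$ unfolding $\mathbf X_{(n)}$ is the $I_n\times\prod_{k\neq n}I_k$ matrix whose rows are indexed by $i_n$ and whose columns are exactly the vectors obtained from $\mathscr X$ by fixing all indices other than $i_n$. A subtensor of $\mathscr X$ is a tensor $\mathscr Y\in\mathbb R^{J_1\times\cdots\times J_N}$ with $1\le J_n\le I_n$ of the form $y_{j_1\cdots j_N}=x_{i_{1j_1}\cdots i_{Nj_N}}$ for some indices $1\leq i_{n1}<\cdots<i_{nJ_n}\leq I_n$, $1\le n\le N$. *)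

(* Defs.v *)
From HB Require Import structures.
From mathcomp Require Import all_boot all_order all_algebra.
From mathcomp Require Import reals.
Set Implicit Arguments. Unset Strict Implicit. Unset Printing Implicit Defensive.
Import Order.TTheory GRing.Theory Num.Theory.
Local Open Scope ring_scope.

Definition mindex (N : nat) (I : 'I_N -> nat) := {dffun forall k : 'I_N, 'I_(I k)}.

Definition tensor (R : Type) (N : nat) (I : 'I_N -> nat) := mindex I -> R.

(* Column index of the mode-n unfolding: a choice of all indices other than i_n. *)
Definition cindex (N : nat) (I : 'I_N -> nat) (n : 'I_N) :=
  {dffun forall k : {k : 'I_N | k != n}, 'I_(I (sval k))}.

Definition merge_val (N : nat) (I : 'I_N -> nat) (n : 'I_N)
    (i : 'I_(I n)) (c : cindex I n) (k : 'I_N) : 'I_(I k) :=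
  match @idP (k != n) with
  | ReflectT h => c (exist _ k h)
  | ReflectF h => cast_ord (congr1 I (esym (eqP (negbNE (introN idP h))))) i
  end.

Definition merge (N : nat) (I : 'I_N -> nat) (n : 'I_N)
    (i : 'I_(I n)) (c : cindex I n) : mindex I :=
  [ffun k => merge_val i c k].

(* Mode-n unfolding: rows indexed by i_n, columns are the mode-n fibres
   (enumerated in the fixed order enum (cindex I n)). *)
Definition unfolding (R : Type) (N : nat) (I : 'I_N -> nat)
    (X : tensor R I) (n : 'I_N) : 'M[R]_(I n, #|{: cindex I n}|) :=
  \matrix_(i, j) X (merge i (enum_val j)).

Definition subtensor (R : Type) (N : nat) (I J : 'I_N -> nat) (X : tensor R I)
    (f : forall k : 'I_N, 'I_(J k) -> 'I_(I k)) : tensor R J :=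
  fun j => X [ffun k => f k (j k)].

Definition strictly_increasing (m p : nat) (g : 'I_m -> 'I_p) : Prop :=
  forall a b : 'I_m, (a < b)%N -> (g a < g b)%N.

(* Main.v *)
Require Import Defs.
From HB Require Import structures.
From mathcomp Require Import all_boot all_order all_algebra.
From mathcomp Require Import reals.
Import Order.TTheory GRing.Theory Num.Theory.
Local Open Scope ring_scope.
Set Implicit Arguments. Unset Strict Implicit. Unset Printing Implicit Defensive.

Section Sel.
Variable R : fieldType.
Variables (m n : nat) (A : 'M[R]_(m, n)).
Definition selS : {set 'I_m} := [set maxrankfun A i | i : 'I_(\rank A)].
Lemma card_selS : #|selS| = \rank A.
Proof. rewrite card_imset ?card_ord //. apply: maxrankfun_inj. Qed.
Definition sel (i : 'I_(\rank A)) : 'I_m := enum_val (cast_ord (esym card_selS) i).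
Lemma sel_incr : strictly_increasing sel.
Proof.
move=> a b ab; rewrite /sel.
set a' := cast_ord _ a; set b' := cast_ord _ b.
have hs : sorted (relpre val ltn) (enum selS).
  rewrite /enum_mem -enumT /=; apply: sorted_filter.
    by move=> x y z /=; apply: ltn_trans.
  by rewrite -sorted_map val_enum_ord iota_ltn_sorted.
rewrite (enum_val_nth (enum_val a') a') (enum_val_nth (enum_val a') b').
apply: (sorted_ltn_nth (leT := relpre val ltn)) => //.
- by move=> x y z /=; apply: ltn_trans.
- by rewrite inE -cardE ltn_ord.
- by rewrite inE -cardE ltn_ord.
Qed.
Lemma sel_span : (A <= rowsub sel A)%MS.
Proof.
apply: (@submx_trans _ _ _ _ _ _ (rowsub (maxrankfun A) A)); first by rewrite (eq_maxrowsub A).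
apply/row_subP => i; rewrite row_rowsub.
have hin : maxrankfun A i \in selS by apply: imset_f.
have -> : maxrankfun A i = sel (cast_ord card_selS (enum_rank_in hin (maxrankfun A i))).
  by rewrite /sel cast_ordK enum_rankK_in.
by rewrite -row_rowsub row_sub.
Qed.
End Sel.

Section Tens.
Variables (N : nat) (I : 'I_N -> nat).

Lemma match_idP_T (b : bool) (P : Type) (f : b -> P) (g : ~ b -> P) (hb : b) :
  match @idP b with ReflectT h => f h | ReflectF h => g h end = f hb.
Proof.
move: f g hb; destruct (@idP b) as [h|h] => f g hb; last by case: (h hb).
by rewrite (bool_irrelevance h hb).
Qed.

Lemma match_idP_F (b : bool) (P : Type) (f : b -> P) (g : ~ b -> P) (hb : ~ b) y :
  (forall h, g h = y) ->
  match @idP b with ReflectT h => f h | ReflectF h => g h end = y.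
Proof.
move: f g hb; destruct (@idP b) as [h|h] => f g hb; first by case: (hb isT).
by move=> ->.
Qed.

Lemma merge_val_ne (n : 'I_N) (i : 'I_(I n)) (c : cindex I n) (l : 'I_N) (h : l != n) :
  merge_val i c l = c (exist _ l h).
Proof.
rewrite /merge_val; exact: (match_idP_T _ _ h).
Qed.

Lemma merge_val_eq (n : 'I_N) (i : 'I_(I n)) (c : cindex I n) :
  merge_val i c n = i.
Proof.
have hn : ~ (n != n) by rewrite eqxx.
rewrite /merge_val; apply: (@match_idP_F (n != n) _ _ _ hn i).
by move=> h; apply: val_inj.
Qed.

Definition restr (n : 'I_N) (x : mindex I) : cindex I n := [ffun l => x (sval l)].
Definition upd (x : mindex I) (k : 'I_N) (v : 'I_(I k)) : mindex I :=
  [ffun l => if l == k then insubd (x l) (val v) else x l].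
Arguments upd : clear implicits.

Lemma upd_eq (x : mindex I) (k : 'I_N) (v : 'I_(I k)) : upd x k v k = v.
Proof. by rewrite ffunE eqxx; apply: val_inj; rewrite val_insubd ltn_ord. Qed.

Lemma upd_ne (x : mindex I) (k : 'I_N) (v : 'I_(I k)) (l : 'I_N) : l != k -> upd x k v l = x l.
Proof. by rewrite ffunE => /negbTE ->. Qed.

Lemma upd_id (x : mindex I) (k : 'I_N) : upd x k (x k) = x.
Proof.
apply/ffunP => l; case: (eqVneq l k) => [->|h]; first by rewrite upd_eq.
by rewrite upd_ne.
Qed.

Lemma upd_comm (x : mindex I) (k l : 'I_N) (a : 'I_(I k)) (b : 'I_(I l)) : k != l -> upd (upd x k a) l b = upd (upd x l b) k a.
Proof.
move=> kl; apply/ffunP => j.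
case: (eqVneq j k) => [->|jk].
  by rewrite upd_ne // !upd_eq.
case: (eqVneq j l) => [->|jl].
  by rewrite upd_eq upd_ne 1?eq_sym // upd_eq.
by rewrite !upd_ne.
Qed.

Lemma merge_restr (n : 'I_N) (v : 'I_(I n)) (x : mindex I) : Defs.merge v (restr n x) = upd x n v.
Proof.
apply/ffunP => l; rewrite ffunE; case: (eqVneq l n) => [->|h].
  by rewrite merge_val_eq upd_eq.
by rewrite merge_val_ne upd_ne // ffunE.
Qed.

Lemma restr_merge (n : 'I_N) (i : 'I_(I n)) (c : cindex I n) : restr n (Defs.merge i c) = c.
Proof.
by apply/ffunP => -[l h]; rewrite !ffunE /= (merge_val_ne _ _ h).
Qed.

Lemma merge_upd (n : 'I_N) (i v : 'I_(I n)) (c : cindex I n) : Defs.merge v c = upd (Defs.merge i c) n v.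
Proof. by rewrite -merge_restr restr_merge. Qed.

End Tens.
Arguments upd {N I} x k v.

Section Main.
Variables (R : fieldType) (N : nat) (I : 'I_N -> nat) (X : tensor R I).

Lemma unfold_span k m (h : 'I_m -> 'I_(I k)) :
  (unfolding X k <= rowsub h (unfolding X k))%MS ->
  exists D : 'M[R]_(I k, m), forall x, X x = \sum_s D (x k) s * X (upd x k (h s)).
Proof.
case/submxP => D HD; exists D => x.
have := congr1 (fun M : 'M_(_, _) => M (x k) (enum_rank (restr k x))) HD.
rewrite !mxE enum_rankK merge_restr upd_id => ->.
by apply: eq_bigr => s _; rewrite !mxE enum_rankK merge_restr.
Qed.

Variables (J : 'I_N -> nat) (g : forall k, 'I_(J k) -> 'I_(I k)).

Definition liftc n (c : cindex J n) : cindex I n := [ffun l => g (c l)].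

Lemma unfolding_sub (n : 'I_N) :
  unfolding (subtensor X g) n =
  rowsub (@g n) (colsub (fun j => enum_rank (liftc (enum_val j))) (unfolding X n)).
Proof.
apply/matrixP => i j; rewrite !mxE /subtensor enum_rankK; congr X.
apply/ffunP => k; rewrite !ffunE; case: (eqVneq k n) => [->|h].
  by rewrite !merge_val_eq.
by rewrite !merge_val_ne ffunE.
Qed.

Lemma rank_sub_le (n : 'I_N) : (\rank (unfolding (subtensor X g) n) <= \rank (unfolding X n))%N.
Proof.
rewrite unfolding_sub; set C := colsub _ _.
apply: leq_trans (mxrankS (rowsub_sub _ _)) _.
rewrite -mxrank_tr /C trmx_mxsub -(mxrank_tr (unfolding X n)).
exact: mxrankS (rowsub_sub _ _).
Qed.

Hypothesis Hspan : forall k, exists D : 'M[R]_(I k, J k),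
  forall x, X x = \sum_s D (x k) s * X (upd x k (@g k s)).

Lemma base_case (n : 'I_N) (x : mindex I) : (forall l, l != n -> x l \in codom (@g l)) ->
  (\row_s X (upd x n (@g n s)) <= (unfolding (subtensor X g) n)^T)%MS.
Proof.
move=> H.
pose c' : cindex J n := [ffun l => iinv (H (sval l) (svalP l))].
have -> : \row_s X (upd x n (@g n s)) = row (enum_rank c') (unfolding (subtensor X g) n)^T.
  apply/rowP => s; rewrite !mxE enum_rankK /subtensor; congr X.
  apply/ffunP => k; rewrite !ffunE; case: (eqVneq k n) => [->|hk].
    by rewrite merge_val_eq; apply: val_inj; rewrite val_insubd ltn_ord.
  by rewrite (merge_val_ne _ _ hk) ffunE f_iinv.
exact: row_sub.
Qed.

Lemma all_sub (n : 'I_N) (x : mindex I) :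
  (\row_s X (upd x n (@g n s)) <= (unfolding (subtensor X g) n)^T)%MS.
Proof.
pose d (y : mindex I) := #|[pred l | (l != n) && (y l \notin codom (@g l))]|.
move: {2}(d x) (leqnn (d x)) => m; elim: m x => [|m IH] x Hd.
  apply: base_case => l ln; move: Hd; rewrite leqn0 => /eqP/card0_eq/(_ l).
  by rewrite !inE ln /= => /negbFE.
case: (pickP [pred l | (l != n) && (x l \notin codom (@g l))]) => [l0 /andP [l0n l0c]|H0]; last first.
  apply: base_case => l ln; have := H0 l; rewrite /= ln /=; by move/negbFE.
have [D HD] := Hspan l0.
have -> : \row_s X (upd x n (@g n s)) =
   \sum_t D (x l0) t *: \row_s X (upd (upd x l0 (@g l0 t)) n (@g n s)).
  apply/rowP => s; rewrite mxE summxE HD upd_ne //.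
  by apply: eq_bigr => t _; rewrite !mxE upd_comm // eq_sym.
apply: summx_sub => t _; apply: scalemx_sub; apply: IH.
rewrite -ltnS; apply: leq_trans Hd; apply: proper_card; apply/properP; split.
  apply/subsetP => l; rewrite !inE => /andP [ln lc].
  have ll0 : l != l0 by apply: contraNneq lc => ->; rewrite upd_eq codom_f.
  by move: lc; rewrite upd_ne // ln.
exists l0; first by rewrite !inE l0n.
by rewrite !inE l0n upd_eq codom_f.
Qed.

Lemma rank_sub_ge (n : 'I_N) (i0 : 'I_(I n)) :
  (unfolding X n <= rowsub (@g n) (unfolding X n))%MS ->
  (\rank (unfolding X n) <= \rank (unfolding (subtensor X g) n))%N.
Proof.
move=> Hs; apply: leq_trans (mxrankS Hs) _.
rewrite -mxrank_tr -(mxrank_tr (unfolding (subtensor X g) n)); apply: mxrankS.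
apply/row_subP => c.
have -> : row c (rowsub (@g n) (unfolding X n))^T =
   \row_s X (upd (Defs.merge i0 (enum_val c)) n (@g n s)).
  by apply/rowP => s; rewrite !mxE (merge_upd i0).
exact: all_sub.
Qed.

End Main.

Unset Implicit Arguments.
Set Strict Implicit.

Theorem proposition3p5 (R : realType) (N : nat) (I : 'I_N -> nat)
    (X : tensor R I) :
  (exists i : mindex I, X i != 0) ->
  exists f : forall k : 'I_N, 'I_(\rank (unfolding X k)) -> 'I_(I k),
    (forall k, (0 < \rank (unfolding X k))%N /\ strictly_increasing (f k)) /\
    (forall n : 'I_N,
       \rank (unfolding (subtensor X f) n) = \rank (unfolding X n)).
Proof.
case=> x0 hx0.
exists (fun k => @sel _ _ _ (unfolding X k)); split.
  move=> k; split; last exact: sel_incr.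
  rewrite lt0n mxrank_eq0; apply/eqP => H0.
  have := congr1 (fun M : 'M_(_, _) => M (x0 k) (enum_rank (restr k x0))) H0.
  by rewrite !mxE enum_rankK merge_restr upd_id; apply/eqP.
move=> n; apply/eqP; rewrite eqn_leq rank_sub_le /=.
apply: (rank_sub_ge _ (x0 n)); last exact: sel_span.
move=> k; apply: unfold_span; exact: sel_span.
Qed.
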